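(* Let $p,q\ge 1$ and let $M$ be a real $(p+q)\times(p+q)$ matrix of the form $$M=\begin{pmatrix}A&O\\ H&B\end{pmatrix}\quad\text{or}\quad M=\begin{pmatrix}A&H\\ O&B\end{pmatrix},$$ where $A$ is a $p\times p$ positive definite symmetric matrix, $B$ is a $q\times q$ negative definite symmetric matrix, $O$ is a zero block and $H$ is an arbitrary real matrix of the appropriate size. Then $M^{-1}M^{T}$ is conjugate in $GL(p+q,\mathbb R)$ to a symmetric matrix. Consequently the characteristic polynomial of $M^{-1}M^T$ has only real zeros. *)

(* Defs.v *)
From HB Require Import structures.
From mathcomp Require Import all_boot all_order all_algebra.
Set Implicit Arguments. Unset Strict Implicit. Unset Printing Implicit Defensive.
Import Order.TTheory GRing.Theory Num.Theory.
Local Open Scope ring_scope.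

Definition posdef_sym (R : realFieldType) (n : nat) (A : 'M[R]_n) : Prop :=
  A^T = A /\ forall v : 'rV[R]_n, v != 0 -> 0 < (v *m A *m v^T) 0 0.

Definition negdef_sym (R : realFieldType) (n : nat) (B : 'M[R]_n) : Prop :=
  B^T = B /\ forall v : 'rV[R]_n, v != 0 -> (v *m B *m v^T) 0 0 < 0.

(* Main.v *)
Require Import Defs.
From HB Require Import structures.
From mathcomp Require Import all_boot all_order all_algebra.
From mathcomp Require Import complex.
Import Order.TTheory GRing.Theory Num.Theory.
Set Implicit Arguments. Unset Strict Implicit.
Local Open Scope ring_scope.
Lemma char_poly_conj (F : fieldType) n (P N : 'M[F]_n) : P \in unitmx ->
  char_poly (invmx P *m N *m P) = char_poly N.
Proof.
move=> Pu; rewrite /char_poly /char_poly_mx.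
have XE : ('X%:M : 'M[{poly F}]_n) = map_mx polyC (invmx P) *m 'X%:M *m map_mx polyC P.
  by rewrite mul_mx_scalar -scalemxAl -map_mxM mulVmx // map_mx1 scalemx1.
rewrite [in LHS]XE.
rewrite !map_mxM -mulmxBl -mulmxBr !det_mulmx mulrC mulrA -det_mulmx -map_mxM.
by rewrite mulmxV // map_mx1 det1 mul1r.
Qed.

Lemma sym_split (R : rcfType) n (S : 'M[R]_n) : S^T = S ->
  exists rs : seq R, char_poly S = \prod_(r <- rs) ('X - r%:P).
Proof.
move=> Ssym.
pose f := real_complex R.
pose Sc := map_mx f S.
have Sh : Sc \is hermsymmx.
  apply: realsym_hermsym.
    apply/is_hermitianmxP; rewrite expr0 scale1r map_mx_id // /Sc map_trmx Ssym //.
  by apply/mxOverP => i j; rewrite mxE; apply/complex_realP; eexists.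
have dreal := hermitian_spectral_diag_real Sh.
have /orthomx_spectralP Se := hermitian_normalmx Sh.
exists [seq @complex.Re R (spectral_diag Sc 0 i) | i <- enum 'I_n].
apply: (@map_poly_inj _ _ f).
rewrite map_char_poly -/Sc [in char_poly Sc]Se char_poly_conj ?spectral_unit //.
rewrite char_poly_trig ?diag_mx_is_trig // rmorph_prod big_map big_enum /=.
apply: eq_bigr => i _; rewrite mxE eqxx mulr1n rmorphB /= map_polyX map_polyC /=.
rewrite /f RRe_real //.
by move/mxOverP: dreal => /(_ 0 i).
Qed.
Definition PD (R : rcfType) n (A : 'M[R]_n) :=
  A^T = A /\ forall v : 'rV[R]_n, v != 0 -> 0 < (v *m A *m v^T) 0 0.

Definition CH (R : rcfType) n (A : 'M[R]_n) :=
  exists X : 'M[R]_n, X \in unitmx /\ X^T *m A *m X = 1%:M.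

Lemma PD_congr (R : rcfType) n (A Y : 'M[R]_n) : Y \in unitmx -> PD A ->
  PD (Y^T *m A *m Y).
Proof.
move=> Yu [As Ap]; split.
  by rewrite !trmx_mul trmxK As mulmxA.
move=> v v0; have -> : v *m (Y^T *m A *m Y) *m v^T = (v *m Y^T) *m A *m (v *m Y^T)^T.
  by rewrite trmx_mul trmxK !mulmxA.
apply: Ap; rewrite mulmx_free_eq0 // row_free_unit unitmx_tr //.
Qed.

Lemma chol_step (R : rcfType) n : (forall C : 'M[R]_n, PD C -> CH C) ->
  forall A : 'M[R]_(1 + n), PD A -> CH A.
Proof.
move=> IH A PA.
have [a [b [c [d Ae]]]] : exists a b c d, A = block_mx a b c d.
  by exists (ulsubmx A), (ursubmx A), (dlsubmx A), (drsubmx A); rewrite submxK.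
move: PA; rewrite Ae => PA; case: (PA) => Asym Apos.
rewrite tr_block_mx in Asym; case/eq_block_mx: Asym => aS cS bS dS.
rewrite -bS {c cS bS Ae A} in PA Apos *.
pose al := a 0 0.
have aE : a = al%:M by rewrite {1}[a]mx11_scalar.
rewrite aE {aS} in PA Apos *.
have alpos : 0 < al.
  have := Apos (row_mx 1%:M 0).
  rewrite row_mx_eq0 oner_eq0 /= => /(_ isT).
  rewrite mul_row_block tr_row_mx mul_row_col !mul0mx !addr0 trmx0 mulmx0 addr0.
  by rewrite mul1mx tr_scalar_mx mulmx1 mxE eqxx mulr1n.
pose Y : 'M[R]_(1 + n) := block_mx 1%:M (- al^-1 *: b) 0 1%:M.
have Yu : Y \in unitmx by rewrite unitmxE det_ublock !det1 mulr1 unitr1.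
pose C' := d - al^-1 *: (b^T *m b).
have YAY : Y^T *m block_mx al%:M b b^T d *m Y = block_mx al%:M 0 0 C'.
  rewrite tr_block_mx !trmx1 trmx0 !mulmx_block.
  rewrite ?mul1mx ?mul0mx ?addr0 ?add0r ?mulmx0 ?mulmx1 ?addr0 ?mul1mx ?add0r.
  have al0 : al != 0 by rewrite gt_eqF.
  have E1 : al%:M *m (- al^-1 *: b) + b = 0.
    by rewrite mul_scalar_mx scalerA mulrN mulfV // scaleN1r addNr.
  have E2 : (- al^-1 *: b)^T *m al%:M + b^T = 0.
    rewrite linearZ /= mul_mx_scalar scalerA.
 by rewrite mulrN mulfV // scaleN1r addNr.
  rewrite E1 E2 mul0mx add0r /C' linearZ /= -scalemxAl scaleNr addrC.
  by [].
have [PBs PBp] := PD_congr Yu PA; rewrite YAY in PBs PBp.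
have PC : PD C'.
  split.
    by move: PBs; rewrite tr_block_mx => /eq_block_mx [].
  move=> w w0; have := PBp (row_mx 0 w).
  rewrite row_mx_eq0 eqxx w0 /= => /(_ isT).
  rewrite mul_row_block tr_row_mx mul_row_col !mul0mx !add0r trmx0.
  by rewrite mulmx0 add0r.
have [X' [X'u X'E]] := IH _ PC.
pose s := Num.sqrt al.
have s0 : 0 < s by rewrite sqrtr_gt0.
pose Z : 'M[R]_(1 + n) := block_mx (s^-1)%:M 0 0 X'.
exists (Y *m Z); split.
  rewrite unitmx_mul Yu unitmxE det_ublock det_scalar1 unitrM unitfE invr_eq0 gt_eqF //=.
have -> : (Y *m Z)^T *m block_mx al%:M b b^T d *m (Y *m Z) =
    Z^T *m (Y^T *m block_mx al%:M b b^T d *m Y) *m Z by rewrite trmx_mul !mulmxA.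
rewrite YAY /Z tr_block_mx !trmx0 tr_scalar_mx !mulmx_block.
rewrite ?mul0mx ?mulmx0 ?addr0 ?add0r X'E.
rewrite !mul0mx -!scalar_mxM [1%:M in RHS]scalar_mx_block.
congr block_mx; congr scalar_mx.
rewrite mulrC mulrA -expr2 exprVn /s.
by rewrite -{2}(sqr_sqrtr (ltW alpos)) mulVf // expf_eq0 gt_eqF.
Qed.

Lemma chol (R : rcfType) n (A : 'M[R]_n) : PD A -> CH A.
Proof.
elim: n A => [|n IH] A PA.
  exists 1%:M; split; first by rewrite unitmxE det_mx00 unitr1.
  by apply/matrixP => [[]].
move: A PA; exact: (@chol_step R n IH).
Qed.

Lemma KK1 (R : comUnitRingType) p q (G : 'M[R]_(q, p)) :
  block_mx (1%:M : 'M_p) 0 G (-1%:M : 'M_q) *m block_mx 1%:M 0 G (-1%:M) = 1%:M.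
Proof.
rewrite mulmx_block ?mulmx0 ?mulmx1 ?mul0mx ?addr0 ?add0r ?mulmxN ?mulNmx ?mulmx1 ?mul1mx.
by rewrite ?addrN ?opprK -scalar_mx_block.
Qed.

Lemma KK2 (R : comUnitRingType) p q (G : 'M[R]_(p, q)) :
  block_mx (1%:M : 'M_p) G 0 (-1%:M : 'M_q) *m block_mx 1%:M G 0 (-1%:M) = 1%:M.
Proof.
rewrite mulmx_block ?mulmx0 ?mulmx1 ?mul0mx ?addr0 ?add0r ?mulmxN ?mulNmx ?mulmx1 ?mul1mx.
by rewrite ?addrN ?opprK -scalar_mx_block.
Qed.

Theorem proposition4p9 (R : rcfType) (p q : nat) (hp : (0 < p)%N) (hq : (0 < q)%N)
  (A : 'M[R]_p) (B : 'M[R]_q) (M : 'M[R]_(p + q))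
  (hA : posdef_sym A) (hB : negdef_sym B)
  (hM : (exists H : 'M[R]_(q, p), M = block_mx A 0 H B) \/
        (exists H : 'M[R]_(p, q), M = block_mx A H 0 B)) :
  (exists (P S : 'M[R]_(p + q)),
      P \in unitmx /\ S^T = S /\ invmx P *m (invmx M *m M^T) *m P = S) /\
  (exists rs : seq R,
      char_poly (invmx M *m M^T) = \prod_(r <- rs) ('X - r%:P)).
Proof.
have [X [Xu XE]] := chol (hA : PD A).
have PB : PD (- B).
  case: hB => Bs Bn; split; first by rewrite linearN /= Bs.
  move=> v v0; rewrite mulmxN mulNmx mxE oppr_gt0; exact: Bn.
have [Y [Yu YE]] := chol PB.
have YE' : Y^T *m B *m Y = - 1%:M by rewrite -YE mulmxN mulNmx opprK.
pose D : 'M[R]_(p + q) := block_mx X 0 0 Y.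
have Du : D \in unitmx.
  by rewrite unitmxE det_ublock unitrM -!unitmxE Xu Yu.
pose K := D^T *m M *m D.
have KK : K *m K = 1%:M.
  rewrite /K /D tr_block_mx !trmx0.
  case: hM => [[H ->]|[H ->]]; rewrite !mulmx_block ?mul0mx ?mulmx0 ?addr0 ?add0r XE YE'.
    by rewrite ?mul0mx ?mulmx0 ?mul1mx ?mulmx1 ?mulNmx ?mulmxN ?mul1mx ?mulmx1 ?addr0 ?add0r ?addrN ?opprK -scalar_mx_block.
  by rewrite ?mul0mx ?mulmx0 ?mul1mx ?mulmx1 ?mulNmx ?mulmxN ?mul1mx ?mulmx1 ?addr0 ?add0r ?addrN ?opprK -scalar_mx_block.
have Ku : K \in unitmx by case: (mulmx1_unit KK).
have Mu : M \in unitmx.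
  by move: Ku; rewrite /K !unitmx_mul => /andP [/andP [_ ->]].
pose L := invmx D *m (invmx M *m M^T) *m D.
have KL : K *m L = K^T.
  rewrite /K /L !trmx_mul trmxK !mulmxA mulmxK //.
  by rewrite -[_ *m M *m invmx M]mulmxA mulmxV // mulmx1.
have LE : L = K *m K^T by rewrite -KL mulmxA KK mul1mx.
split.
  exists D, (K *m K^T); split => //; split => //.
  by rewrite trmx_mul trmxK.
rewrite -(char_poly_conj _ Du) -/L LE.
apply: sym_split.
by rewrite trmx_mul trmxK.
Qed.
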